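(* Let $G$ be a finite group and let $g,h\in G$ with $\langle g\rangle=\langle h\rangle$. Suppose there is a normal subgroup $N\trianglelefteq G$ such that $G/N$ is semi-rational, $gN\subseteq O(g)$ and $hN\subseteq O(h)$. Then $N_{w,G}(g)=N_{w,G}(h)$ for every $r\in\mathbb{N}$ and every word $w\in F_r$.
   Context: For $r\in\mathbb{N}$ and a word $w\in F_r$ (free group on $x_1,\dots,x_r$), the word map $w:G^r\to G$ substitutes $g_i$ for $x_i$, and $N_{w,G}(g)=|\{(g_1,\dots,g_r)\in G^r: w(g_1,\dots,g_r)=g\}|$. A finite group $H$ is semi-rational if for every $r$ and every $w\in F_r$, $N_{w,H}$ is a generalized character, i.e. $\langle N_{w,H},\chi\rangle\in\mathbb{Z}$ for every irreducible character $\chi$ of $H$. For $g\in G$, $O(g)=\{\alpha(g):\alpha\in\mathrm{Aut}(G)\}$ denotes the orbit of $g$ under the automorphism group. *)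

(* Defs.v *)
From HB Require Import structures.
From mathcomp Require Import all_boot all_order all_algebra all_fingroup all_solvable all_field all_character.
Set Implicit Arguments. Unset Strict Implicit. Unset Printing Implicit Defensive.
Import GRing.Theory Num.Theory.

(* A word of the free group F_r on x_1..x_r (x_i indexed by 'I_r), given as a
   (not necessarily reduced) sequence of letters (i, inv): the letter is x_i
   if inv = false and x_i^-1 if inv = true.  Every element of F_r is
   represented by such a sequence, and the word map only depends on the
   element of F_r represented. *)
Definition word (r : nat) := seq ('I_r * bool).

Definition letter_eval (gT : finGroupType) (r : nat) (t : {ffun 'I_r -> gT})
  (l : 'I_r * bool) : gT :=
  if l.2 then ((t l.1)^-1)%g else t l.1.

Definition word_eval (gT : finGroupType) (r : nat) (w : word r)
  (t : {ffun 'I_r -> gT}) : gT :=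
  (\prod_(l <- w) letter_eval t l)%g.

Definition Nw (gT : finGroupType) (H : {set gT}) (r : nat) (w : word r)
  (x : gT) : nat :=
  #|[set t : {ffun 'I_r -> gT} | [forall i, t i \in H] && (word_eval w t == x)]|.

Definition Nw_dot (gT : finGroupType) (H : {group gT}) (r : nat) (w : word r)
  (i : Iirr H) : algC :=
  ((#|H|%:R)^-1 * \sum_(x in H) (Nw H w x)%:R * (('chi[H]_i x)^*)%C)%R.

(* H is semi-rational: for every r and every w in F_r, N_{w,H} is a
   generalized character, i.e. <N_{w,H}, chi> is an integer for every
   irreducible character chi of H. *)
Definition semi_rational (gT : finGroupType) (H : {group gT}) : Prop :=
  forall (r : nat) (w : word r) (i : Iirr H), Nw_dot w i \in Num.int.

Definition aut_orbit (gT : finGroupType) (G : {set gT}) (g : gT) : {set gT} :=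
  [set (a : {perm gT}) g | a in Aut G].

(* Main.v *)
Require Import Defs.
From mathcomp Require Import all_boot all_order all_algebra all_fingroup all_solvable all_field all_character.
Set Implicit Arguments. Unset Strict Implicit. Unset Printing Implicit Defensive.
Import GRing.Theory Num.Theory.
Local Open Scope group_scope.

Lemma word_eval_in (gT : finGroupType) (D : {group gT}) r (w : word r) (t : {ffun 'I_r -> gT}) :
  (forall i, t i \in D) -> word_eval w t \in D.
Proof.
move=> tD; rewrite /word_eval; elim: w => [|l w IH]; first by rewrite big_nil group1.
rewrite big_cons groupM // /letter_eval; case: l.2; rewrite ?groupV //.
Qed.

Lemma word_eval_morph (gT rT : finGroupType) (D : {group gT})
  (f : {morphism D >-> rT}) r (w : word r) (t : {ffun 'I_r -> gT}) :
  (forall i, t i \in D) -> f (word_eval w t) = word_eval w [ffun i => f (t i)].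
Proof.
move=> tD; rewrite /word_eval; elim: w => [|l w IH]; first by rewrite !big_nil morph1.
have lD : letter_eval t l \in D by rewrite /letter_eval; case: l.2; rewrite ?groupV.
rewrite !big_cons morphM //; last by apply: (word_eval_in w tD).
rewrite IH /letter_eval ffunE; case: l.2 => //; rewrite morphV //.
Qed.
Section S2.
Local Open Scope group_scope.

Lemma Nw_aut_le (gT : finGroupType) (H : {group gT}) r (w : word r)
  (a : {perm gT}) y : a \in Aut H -> (Nw H w y <= Nw H w (a y))%N.
Proof.
move=> Aa; rewrite /Nw.
pose m := fun t : {ffun 'I_r -> gT} => [ffun i => a (t i)].
have minj : injective m.
  move=> t1 t2 /ffunP E; apply/ffunP => i; move: (E i); rewrite !ffunE.
  exact: perm_inj.
rewrite -(card_imset _ minj); apply: subset_leq_card; apply/subsetP => _ /imsetP[t tS ->]; move: tS.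
rewrite inE => /andP[/forallP tH /eqP ty]; rewrite inE; apply/andP; split.
  by apply/forallP => i; rewrite ffunE Aut_closed.
rewrite -ty -(autmE Aa) (word_eval_morph (autm Aa) w tH).
by apply/eqP; congr word_eval; apply/ffunP => i; rewrite !ffunE autmE.
Qed.

Lemma Nw_aut (gT : finGroupType) (H : {group gT}) r (w : word r)
  (a : {perm gT}) y : a \in Aut H -> Nw H w (a y) = Nw H w y.
Proof.
move=> Aa; apply/eqP; rewrite eqn_leq Nw_aut_le // andbT.
have := Nw_aut_le w (a y) (groupVr Aa); rewrite permK //.
Qed.
End S2.
Section S3.
Local Open Scope group_scope.
Local Open Scope ring_scope.

Local Open Scope group_scope.
Lemma char_expg (gT : finGroupType) (H : {group gT}) (chi : 'CF(H)) y k
  (u : {rmorphism algC -> algC}) :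
  chi \is a character -> y \in H ->
  (forall z, (z ^+ #[y] = 1)%R -> u z = (z ^+ k)%R) -> chi (y ^+ k) = u (chi y).
Proof.
move=> Nchi Hy Du.
have sCH : <[y]> \subset H by rewrite cycle_subG.
have Cy : y \in <[y]> := cycle_id y.
have Cyk : y ^+ k \in <[y]> by rewrite groupX.
rewrite -(cfResE chi sCH Cy) -(cfResE chi sCH Cyk).
have [r ->] := char_sum_irr (cfRes_char <[y]> Nchi).
rewrite !sum_cfunE rmorph_sum; apply: eq_bigr => i _.
have lin : 'chi[<[y]>]_i \is a linear_char by rewrite irr_cyclic_lin ?cycle_cyclic.
rewrite lin_charX // Du // -lin_charX // expg_order lin_char1 //.
Qed.
End S3.
Section S4.
Local Open Scope ring_scope.

Lemma Nw_conj (gT : finGroupType) (H : {group gT}) r (w : word r) x z :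
  x \in H -> z \in H -> Nw H w (x ^ z)%g = Nw H w x.
Proof.
move=> Hx Hz.
have Na : conj_aut H z \in Aut H.
  by apply: (subsetP (Aut_conj_aut H H)); apply: mem_morphim => //; rewrite (subsetP (normG H)).
rewrite -(norm_conj_autE (subsetP (normG H) z Hz) Hx); exact: Nw_aut.
Qed.

Lemma Nw_rat (gT : finGroupType) (H : {group gT}) r (w : word r) y k :
  semi_rational H -> y \in H -> coprime k #[y]%g -> Nw H w (y ^+ k)%g = Nw H w y.
Proof.
move=> srH Hy cok.
pose f x := if x \in H then (Nw H w x)%:R else 0 : algC.
have fP : is_class_fun <<H>>%g [ffun x => f x].
  rewrite genGid; apply: intro_class_fun => [x z Hx Hz|x Hx].
    by rewrite /f groupJ // Hx Nw_conj.
  by rewrite /f (negPf Hx).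
pose phi : 'CF(H) := Cfun 0 fP.
have phiE x : phi x = f x by rewrite /phi cfunE.
have dotE i : '[phi, 'chi_i] = Nw_dot w i.
  rewrite cfdotE /Nw_dot; congr (_ * _); apply: eq_bigr => x Hx.
  by rewrite phiE /f Hx.
have Zd i : '[phi, 'chi_i] \in Num.int by rewrite dotE; apply: srH.
have [u Du] := Qn_aut_exists cok.
have Hyk : (y ^+ k)%g \in H by rewrite groupX.
apply/eqP; rewrite -(eqr_nat algC).
have -> : (Nw H w (y ^+ k)%g)%:R = phi (y ^+ k)%g by rewrite phiE /f Hyk.
have -> : (Nw H w y)%:R = u (phi y) by rewrite phiE /f Hy rmorph_nat.
rewrite [phi]cfun_sum_cfdot !sum_cfunE rmorph_sum; apply/eqP/eq_bigr => i _.
rewrite !cfunE rmorphM /= (char_expg _ _ Du) ?irr_char //.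
by rewrite (aut_intr u (Zd i)).

Qed.
End S4.
Section S5.
Local Open Scope group_scope.

Lemma mem_lcoset_coset (gT : finGroupType) (G N : {group gT}) g x :
  N <| G -> g \in G -> x \in G -> (x \in g *: N) = (coset N x == coset N g).
Proof.
move=> /andP[sNG nNG] Gg Gx.
have Ng := subsetP nNG g Gg; have Nx := subsetP nNG x Gx.
rewrite -norm_rlcoset //; apply/idP/eqP; first by move/(rcoset_kercosetP Nx Ng).
by move/(rcoset_kercosetP Nx Ng).
Qed.

Lemma Nw_quo (gT : finGroupType) (G N : {group gT}) r (w : word r) g :
  N <| G -> g \in G ->
  #|[set t : {ffun 'I_r -> gT} | [forall i, t i \in G] && (word_eval w t \in g *: N)]|
  = (#|N| ^ r * Nw (G / N)%G w (coset N g))%N.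
Proof.
move=> nsNG Gg; have /andP[sNG nNG] := nsNG.
pose pi := fun t : {ffun 'I_r -> gT} => [ffun i => coset N (t i)].
have wpi (t : {ffun 'I_r -> gT}) : (forall i, t i \in G) -> word_eval w (pi t) = coset N (word_eval w t).
  move=> tG; rewrite (word_eval_morph (coset_morphism N) w) => [|i].
    by congr word_eval; apply/ffunP => i; rewrite !ffunE.
  exact: subsetP nNG _ (tG i).
rewrite -sum1dep_card.
rewrite (partition_big pi (fun s : {ffun 'I_r -> coset_of N} =>
   [forall i, s i \in (G / N)%G] && (word_eval w s == coset N g))) /=; last first.
  move=> t /andP[/forallP tG wt]; apply/andP; split.
    by apply/forallP => i; rewrite ffunE mem_quotient.
  by rewrite wpi // -(mem_lcoset_coset nsNG) // word_eval_in.
rewrite /Nw -sum1dep_card big_distrr /=; apply: eq_bigr => s /andP[/forallP sG /eqP ws].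
rewrite muln1 sum1dep_card.
have tGi (t : {ffun 'I_r -> gT}) i : t i \in s i -> t i \in G.
  have /morphimP[x Nx Gx ->] := sG i; rewrite val_coset // mem_rcoset => Hn.
  by rewrite -(mulgKV x (t i)) groupM // (subsetP sNG).
have -> : [set x : {ffun 'I_r -> gT} | [forall i, x i \in G] && (word_eval w x \in g *: N) & pi x == s]
    = setXn (fun i => val (s i)).
  apply/setP => t; rewrite in_setXn inE; apply/idP/forallP.
    case/andP=> [/andP[/forallP tG _] /eqP <-] i; rewrite /pi ffunE (_ : val (coset N (t i)) = N :* t i); last exact: val_coset (subsetP nNG _ (tG i)).
    exact: rcoset_refl.
  move=> ts; have tG i : t i \in G by apply: tGi (ts i).
  have pis : pi t = s by apply/ffunP => i; rewrite ffunE; apply: coset_mem.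
  rewrite pis eqxx andbT; apply/andP; split; first by apply/forallP.
  by rewrite (mem_lcoset_coset nsNG) // ?word_eval_in // -wpi // pis ws.
rewrite cardsXn (eq_bigr (fun _ => #|N|)) ?prod_nat_const ?card_ord // => i _.
rewrite -(coset_reprK (s i)) (_ : val (coset N (repr (s i))) = N :* repr (s i)).
  exact: card_rcoset.
exact: val_coset (repr_coset_norm (s i)).
Qed.
End S5.
Section S9.
Local Open Scope group_scope.

Lemma Nw_lcoset (gT : finGroupType) (G N : {group gT}) r (w : word r) g :
  (g *: N \subset aut_orbit G g) ->
  #|[set t : {ffun 'I_r -> gT} | [forall i, t i \in G] && (word_eval w t \in g *: N)]|
  = (#|N| * Nw G w g)%N.
Proof.
move=> sub; rewrite -sum1dep_card.
rewrite (partition_big (word_eval w) (fun x => x \in g *: N)) /=; last first.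
  by move=> t /andP[].
rewrite (eq_bigr (fun _ => Nw G w g)) ?sum_nat_const ?card_lcoset // => x xgN.
rewrite sum1dep_card.
have /imsetP[a Aa ax] := subsetP sub x xgN.
rewrite -(Nw_aut w g Aa) -ax /Nw; apply: eq_card => t; rewrite !inE.
case E: (word_eval w t == x); rewrite ?andbF // !andbT.
by rewrite (eqP E) xgN andbT.
Qed.
End S9.

Theorem proposition2p3 (gT : finGroupType) (G N : {group gT}) (g h : gT) :
  (g \in G) -> (h \in G) -> <[g]>%g = <[h]>%g ->
  (N <| G)%g ->
  semi_rational (G / N)%G ->
  (g *: N \subset aut_orbit G g)%g ->
  (h *: N \subset aut_orbit G h)%g ->
  forall (r : nat) (w : word r), Nw G w g = Nw G w h.
Proof.
move=> Gg Gh egh nsNG srQ sg sh r w.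
have /andP[sNG nNG] := nsNG.
have Ng := subsetP nNG g Gg.
have eg := Nw_lcoset w sg; rewrite (Nw_quo w nsNG Gg) in eg.
have eh := Nw_lcoset w sh; rewrite (Nw_quo w nsNG Gh) in eh.
have : h \in <[g]>%g by rewrite egh cycle_id.
case/cycleP => k hk.
have cok : coprime #[g]%g k by rewrite -generator_coprime -hk /generator egh.
have cok' : coprime k #[coset N g]%g.
  rewrite coprime_sym; apply: coprime_dvdl cok.
  exact: (morph_order (coset_morphism N) Ng).
have Qg : coset N g \in (G / N)%G by rewrite mem_quotient.
have eq : Nw (G / N)%G w (coset N h) = Nw (G / N)%G w (coset N g).
  by rewrite hk morphX // (Nw_rat w srQ Qg cok').
apply/eqP; rewrite -(eqn_pmul2l (cardG_gt0 N)) -eg -eh eq //.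
Qed.
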